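(* Every easy pair of words over a finite alphabet can be separated exactly by a 2-state AfA.
   Context: A pair of words $(x,y)$ means two different words over the same finite alphabet $\Sigma$; it is easy if there is $\sigma\in\Sigma$ with $|x|_\sigma\neq|y|_\sigma$, where $|w|_\sigma$ counts occurrences of $\sigma$ in $w$. An $n$-state affine finite automaton (AfA) over $\Sigma$ consists of real $n\times n$ matrices $A_\sigma$ for $\sigma\in\Sigma\cup\{\$\}$ ($\$$ a right end-marker), each of whose columns sums to $1$; an initial vector $v_0\in\mathbb{R}^n$ with entries summing to $1$; and a set $E_a$ of accepting states. On input $w=w_1\cdots w_k$ the final vector is $v_f=A_\$A_{w_k}\cdots A_{w_1}v_0$, and $w$ is accepted with probability $\sum_{j\in E_a}|v_f[j]|\big/\sum_{j=1}^n|v_f[j]|$. A pair is separated exactly if one word is accepted with probability $1$ and the other with probability $0$. *)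

(* Defs.v *)
From Stdlib Require Import Reals List.
Import ListNotations.
Open Scope R_scope.

Fixpoint sumR (n : nat) (f : nat -> R) : R :=
  match n with
  | O => 0
  | S k => sumR k f + f k
  end.

Definition occ {Sigma : Type} (dec : forall a b : Sigma, {a = b} + {a <> b})
  (a : Sigma) (w : list Sigma) : nat := count_occ dec w a.

Definition easy_pair {Sigma : Type} (dec : forall a b : Sigma, {a = b} + {a <> b})
  (x y : list Sigma) : Prop :=
  x <> y /\ exists a : Sigma, occ dec a x <> occ dec a y.

(* An n-state affine finite automaton over Sigma: states are 0..n-1.
   trans (Some a) is the matrix A_a, trans None is the end-marker matrix A_$.
   Matrices are given entrywise, M i j = row i, column j (only i,j < n matter). *)
Record AfA (Sigma : Type) (n : nat) : Type := mkAfA {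
  trans : option Sigma -> nat -> nat -> R;
  init  : nat -> R;
  accepting : nat -> bool
}.
Arguments trans {Sigma n} _ _ _ _.
Arguments init {Sigma n} _ _.
Arguments accepting {Sigma n} _ _.

Definition AfA_wf {Sigma : Type} {n : nat} (M : AfA Sigma n) : Prop :=
  (forall (a : option Sigma) (j : nat), (j < n)%nat ->
      sumR n (fun i => trans M a i j) = 1) /\
  sumR n (init M) = 1.

Definition mv (n : nat) (A : nat -> nat -> R) (v : nat -> R) : nat -> R :=
  fun i => sumR n (fun j => A i j * v j).

Definition final_vec {Sigma : Type} {n : nat} (M : AfA Sigma n) (w : list Sigma)
  : nat -> R :=
  mv n (trans M None)
     (fold_left (fun v a => mv n (trans M (Some a)) v) w (init M)).

Definition acc_prob {Sigma : Type} {n : nat} (M : AfA Sigma n) (w : list Sigma) : R :=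
  let vf := final_vec M w in
  sumR n (fun j => if accepting M j then Rabs (vf j) else 0) /
  sumR n (fun j => Rabs (vf j)).

Definition separates_exactly {Sigma : Type} {n : nat} (M : AfA Sigma n)
  (x y : list Sigma) : Prop :=
  (acc_prob M x = 1 /\ acc_prob M y = 0) \/
  (acc_prob M x = 0 /\ acc_prob M y = 1).

(* Main.v *)
Require Import Defs.
From Stdlib Require Import Reals List Lra Lia.
Import ListNotations.
Open Scope R_scope.

Section S.
Variable Sigma : Type.
Variable dec : forall a b : Sigma, {a = b} + {a <> b}.
Variable a : Sigma.
Variables p q : R.

Definition endm (i j : nat) : R :=
  match i, j with
  | 0%nat, 0%nat => 1 + p / (q - p)
  | 0%nat, _ => 1 + (1 + p) / (q - p)
  | _, 0%nat => - p / (q - p)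
  | _, _ => - (1 + p) / (q - p)
  end.

Definition tr (o : option Sigma) (i j : nat) : R :=
  match o with
  | Some b => if dec b a then
      match i, j with
      | 0%nat, 0%nat => 2 | 0%nat, _ => 1 | _, 0%nat => -1 | _, _ => 0 end
      else (if Nat.eqb i j then 1 else 0)
  | None => endm i j
  end.

Definition MM : AfA Sigma 2 :=
  mkAfA Sigma 2 tr (fun i => match i with 0%nat => 1 | _ => 0 end) (fun i => Nat.eqb i 1).

Lemma inv : forall w t v, v 0%nat = 1 + t -> v 1%nat = - t ->
  let v' := fold_left (fun v b => mv 2 (tr (Some b)) v) w v in
  v' 0%nat = 1 + t + INR (occ dec a w) /\ v' 1%nat = - (t + INR (occ dec a w)).
Proof.
  induction w as [|b w IH]; intros t v H0 H1; cbn [fold_left].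
  - unfold occ; simpl; split; lra.
  - unfold occ; cbn [count_occ]. destruct (dec b a) as [e|e].
    + destruct (IH (t+1) (mv 2 (tr (Some b)) v)) as [A B].
      * unfold mv, tr; simpl; destruct (dec b a); [|contradiction]. rewrite H0, H1; lra.
      * unfold mv, tr; simpl; destruct (dec b a); [|contradiction]. rewrite H0, H1; lra.
      * unfold occ in A, B. rewrite S_INR. split; lra.
    + destruct (IH t (mv 2 (tr (Some b)) v)) as [A B].
      * unfold mv, tr; simpl; destruct (dec b a); [contradiction|]. rewrite H0, H1; lra.
      * unfold mv, tr; simpl; destruct (dec b a); [contradiction|]. rewrite H0, H1; lra.
      * unfold occ in A, B. split; lra.
Qed.

Lemma fv : forall w, final_vec MM w 0%nat = 1 - (INR (occ dec a w) - p)/(q-p) /\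
   final_vec MM w 1%nat = (INR (occ dec a w) - p)/(q-p).
Proof.
  intros w. unfold final_vec. destruct (inv w 0 (init MM) ltac:(simpl; lra) ltac:(simpl; lra)) as [A B].
  simpl in A, B |- *. unfold mv at 1 3. simpl. rewrite A, B. unfold Rdiv. split; ring.
Qed.
End S.

Theorem mainTheorem8 :
  forall (Sigma : Type) (dec : forall a b : Sigma, {a = b} + {a <> b})
         (enum : list Sigma), (forall a : Sigma, In a enum) ->
  forall x y : list Sigma, easy_pair dec x y ->
  exists M : AfA Sigma 2, AfA_wf M /\ separates_exactly M x y.
Proof.
  intros Sigma dec enum _ x y [_ [a Ha]].
  set (p := INR (occ dec a x)). set (q := INR (occ dec a y)).
  assert (Hd : q - p <> 0).
  { intro E. apply Ha. apply INR_eq. unfold p, q in E. lra. }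
  exists (MM Sigma dec a p q). split.
  - split.
    + intros [b|] j Hj; simpl.
      * destruct (dec b a); destruct j as [|[|j]]; simpl; try lra; lia.
      * destruct j as [|[|j]]; simpl; [| |lia]; field; auto.
    + simpl; lra.
  - right. unfold acc_prob. simpl.
    destruct (fv Sigma dec a p q x) as [A B]. destruct (fv Sigma dec a p q y) as [C D].
    fold p in A, B. fold q in C, D. rewrite A, B, C, D.
    replace ((p - p) / (q - p)) with 0 by (field; auto).
    replace ((q - p) / (q - p)) with 1 by (field; auto).
    rewrite Rminus_0_r, Rminus_diag, Rabs_R0, Rabs_R1. split; field; lra.
Qed.
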